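(* Fix $J=(J_1,J_2)\in\mathbb{R}^2$ and let $S(J)=\{m\in\{1,2,3,4\}: U_m(J)=\min\{U_1(J),U_2(J),U_3(J),U_4(J)\}\}$ and $\mathcal{C}_{S(J)}=\bigcup_{m\in S(J)}\mathcal{C}_m$. Suppose that for every unit ball $b$, every configuration $\sigma_b$ on $b$ belonging to $\mathcal{C}_{S(J)}$, and every unit ball $b'$ neighbouring $b$, there exists exactly one configuration $\sigma'_{b'}$ on $b'$ belonging to $\mathcal{C}_{S(J)}$ that is compatible with $\sigma_b$. Then the relative Hamiltonian $H$ satisfies the Peierls condition.
   Context: Let $G_2$ be the free product of three cyclic groups of order two with generators $a_1,a_2,a_3$; its elements are the vertices $V$ of the Cayley tree $\Gamma^2$ of order 2, where $g,h$ are nearest neighbours (an edge $\langle g,h\rangle$) iff $h=ga_i$ for some $i$; every vertex has 3 neighbours. $d$ is the graph distance. Configurations are maps $\sigma:V\to\{-1,1\}$. A configuration is periodic if there is a subgroup $G^*\subset G_2$ of finite index with $\sigma(gh)=\sigma(h)$ for all $g\in G^*$, $h\in G_2$; it has period not exceeding 2 if such a subgroup of index at most 2 exists. A unit ball is $b=\{y: d(x,y)\le1\}$ for some $x\in V$ (its center $x$ and three leaves); $M$ is the set of unit balls, and $\sigma_b$ is the restriction of $\sigma$ to $b$. Two distinct unit balls are neighbours if they have a common edge; configurations $\sigma_b$, $\sigma'_{b'}$ on neighbouring balls are compatible if they coincide on the endpoints of the common edge. Classes: a configuration on a unit ball belongs to $\mathcal{C}_1$, $\mathcal{C}_2$, $\mathcal{C}_4$,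 $\mathcal{C}_3$ according as exactly $3$, $2$, $1$, $0$ of its leaves carry the same value as its center. The energy of a ball is $U(\sigma_b)=\tfrac12J_1\sum_{\langle x,y\rangle:\,x,y\in b}\sigma(x)\sigma(y)+J_2\sum_{\{x,y\}\subset b:\,d(x,y)=2}\sigma(x)\sigma(y)$ (sums over unordered pairs); it equals $U_1=\tfrac32J_1+3J_2$, $U_2=\tfrac12J_1-J_2$, $U_3=-\tfrac32J_1+3J_2$, $U_4=-\tfrac12J_1-J_2$ on $\mathcal{C}_1,\dots,\mathcal{C}_4$ respectively. For $\sigma,\varphi$ differing at finitely many vertices, the relative Hamiltonian is $H(\sigma,\varphi)=J_1\sum_{\langle x,y\rangle}(\sigma(x)\sigma(y)-\varphi(x)\varphi(y))+J_2\sum_{\{x,y\}:\,d(x,y)=2}(\sigma(x)\sigma(y)-\varphi(x)\varphi(y))$ (unordered pairs). A ground state is a periodic configuration $a$ with $U(a_b)=\min\{U_1,U_2,U_3,U_4\}$ for every $b\in M$. For $x\in V$ let $V_2(x)=\{y: d(x,y)\le2\}$. If the set of all ground states is finite, $\{\sigma^1,\dots,\sigma^q\}$, and each has period not exceeding 2, then for a configuration $\sigma$ the ball $V_2(x)$ is improper if $\sigma|_{V_2(x)}\ne\sigma^j|_{V_2(x)}$ for all $j=1,\dots,q$; the boundary $\partial(\sigma)$ is the union of the improper balls of $\sigma$, and $|\partial(\sigma)|$ is the number of unit balls in $\partial(\sigma)$. $H$ satisfies the Peierls condition if the set of ground states is finite, $\{\sigma^1,\dots,\sigma^q\}$, each of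 period not exceeding 2, and there is a constant $\lambda>0$ such that for every $j$ and every configuration $\sigma$ coinciding with $\sigma^j$ at all but finitely many vertices, $H(\sigma,\sigma^j)\ge\lambda|\partial(\sigma)|$. *)

(* Defs.v *)
From HB Require Import structures.
From mathcomp Require Import all_boot all_order all_algebra.
From mathcomp Require Import all_classical all_reals.
From Stdlib Require List.
Set Implicit Arguments. Unset Strict Implicit. Unset Printing Implicit Defensive.
Import Order.TTheory GRing.Theory Num.Theory.

(* The group G_2 = Z/2 * Z/2 * Z/2 with generators a_0,a_1,a_2 (indices 'I_3) *)
(* Elements are reduced words (no two equal adjacent letters), stored       *)
(* REVERSED: the word a_{i1} a_{i2} ... a_{ik} is stored as [:: ik; ...; i1]. *)

Definition reduced (w : seq 'I_3) : bool := sorted (fun a b : 'I_3 => a != b) w.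

(* right multiplication of a (reversed) word by the generator a_i *)
Definition push (i : 'I_3) (w : seq 'I_3) : seq 'I_3 :=
  match w with
  | j :: w' => if j == i then w' else i :: w
  | [::] => [:: i]
  end.

Lemma push_reduced i w : reduced w -> reduced (push i w).
Proof.
case: w => [|j w] //= H.
case: eqP => [_|/eqP ne].
  exact: (path_sorted H).
by rewrite /reduced /= eq_sym ne H.
Qed.

Lemma rev_reduced w : reduced w -> reduced (rev w).
Proof.
move=> H; rewrite /reduced.
have H' : sorted (fun y x : 'I_3 => x != y) (rev w) by rewrite rev_sorted.
apply: (sub_sorted _ H') => x y /=; by rewrite eq_sym.
Qed.

(* vertices of the Cayley tree = elements of G_2 *)
Definition V := {w : seq 'I_3 | reduced w}.

Definition eV : V := exist _ [::] isT.
Definition pushV (i : 'I_3) (x : V) : V := exist _ (push i (val x)) (push_reduced i (valP x)).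
Definition mulV (g h : V) : V := foldr pushV g (val h).
Definition invV (g : V) : V := exist _ (rev (val g)) (rev_reduced (valP g)).

(* graph distance in the Cayley tree: d(x,y) = |x^{-1} y| (word length) *)
Definition dist (x y : V) : nat := size (val (mulV (invV x) y)).

Definition nbrs (x : V) : seq V := [seq pushV i x | i <- enum 'I_3].
Definition sphere2 (x : V) : seq V :=
  [seq pushV j (pushV i x) | i <- enum 'I_3, j <- [seq j <- enum 'I_3 | j != i]].

(* a configuration sigma : V -> {-1,1}, encoded by a boolean (true = +1) *)
Definition config := V -> bool.
Definition spin {R : realType} (b : bool) : R := (if b then 1 else -1)%R.

Definition subgroup (P : V -> Prop) : Prop :=
  [/\ P eV, (forall g h, P g -> P h -> P (mulV g h)) & (forall g, P g -> P (invV g))].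

Definition index_le (P : V -> Prop) (k : nat) : Prop :=
  exists reps : seq V, size reps <= k /\
    forall h : V, exists2 r, r \in reps & exists g, P g /\ h = mulV g r.

Definition periodic_with (sigma : config) (P : V -> Prop) : Prop :=
  subgroup P /\ forall g h, P g -> sigma (mulV g h) = sigma h.

Definition periodic (sigma : config) : Prop :=
  exists P, periodic_with sigma P /\ exists k, index_le P k.

Definition period_le2 (sigma : config) : Prop :=
  exists P, periodic_with sigma P /\ index_le P 2.

Section Energy.
Variable R : realType.
Local Open Scope ring_scope.

Definition U_ball (J1 J2 : R) (sigma : config) (x : V) : R :=
  2^-1 * J1 * (\sum_(i < 3) spin (sigma x) * spin (sigma (pushV i x)))
  + J2 * (\sum_(i < 3) \sum_(j < 3 | (i < j)%N)
            spin (sigma (pushV i x)) * spin (sigma (pushV j x))).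

Definition Uval (J1 J2 : R) (m : nat) : R :=
  match m with
  | 1 => 3 / 2 * J1 + 3 * J2
  | 2 => 2^-1 * J1 - J2
  | 3 => - (3 / 2) * J1 + 3 * J2
  | _ => - 2^-1 * J1 - J2
  end.

Definition Umin (J1 J2 : R) : R :=
  Num.min (Num.min (Uval J1 J2 1) (Uval J1 J2 2)) (Num.min (Uval J1 J2 3) (Uval J1 J2 4)).

(* relative Hamiltonian H(sigma, phi), computed with a finite set D of
   vertices outside of which sigma and phi coincide; all pairs with a
   nonzero contribution have an endpoint in D, hence both endpoints in the
   list N below. Ordered pairs are summed, hence the factor 1/2. *)
Definition relevant (D : seq V) : seq V :=
  undup (D ++ flatten [seq nbrs x | x <- D] ++ flatten [seq sphere2 x | x <- D]).

Definition Hrel (J1 J2 : R) (D : seq V) (sigma phi : config) : R :=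
  2^-1 * J1 * (\sum_(x <- relevant D) \sum_(y <- nbrs x)
       (spin (sigma x) * spin (sigma y) - spin (phi x) * spin (phi y)))
  + 2^-1 * J2 * (\sum_(x <- relevant D) \sum_(y <- sphere2 x)
       (spin (sigma x) * spin (sigma y) - spin (phi x) * spin (phi y))).

Definition ground_state (J1 J2 : R) (a : config) : Prop :=
  periodic a /\ forall x : V, U_ball J1 J2 a x = Umin J1 J2.

End Energy.

Definition class_of (sigma : config) (x : V) : nat :=
  match count (fun y => sigma y == sigma x) (nbrs x) with
  | 3 => 1 | 2 => 2 | 1 => 4 | _ => 3
  end.

Definition in_CS {R : realType} (J1 J2 : R) (sigma : config) (x : V) : bool :=
  has (fun m => (Uval J1 J2 m == Umin J1 J2) && (class_of sigma x == m)) [:: 1; 2; 3; 4]%N.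

Definition in_ball (x y : V) : bool := (dist x y <= 1)%N.
Definition agree_on_ball (x : V) (s t : config) : Prop :=
  forall y, in_ball x y -> s y = t y.

Definition ball_edges (x : V) : seq (V * V) := [seq (x, pushV i x) | i <- enum 'I_3].
Definition same_edge (e f : V * V) : bool :=
  ((e.1 == f.1) && (e.2 == f.2)) || ((e.1 == f.2) && (e.2 == f.1)).
Definition balls_nbr (x x' : V) : bool :=
  (x != x') && has (fun e => has (same_edge e) (ball_edges x')) (ball_edges x).
Definition compatible (sigma : config) (x : V) (tau : config) (x' : V) : Prop :=
  forall e f, e \in ball_edges x -> f \in ball_edges x' -> same_edge e f ->
    sigma e.1 = tau e.1 /\ sigma e.2 = tau e.2.

Definition improper (gs : seq config) (sigma : config) (x : V) : Prop :=
  forall a, List.In a gs -> exists y, (dist x y <= 2)%N /\ sigma y <> a y.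
Definition in_boundary (gs : seq config) (sigma : config) (y : V) : Prop :=
  exists x, improper gs sigma x /\ (dist x y <= 2)%N.
Definition ball_in_boundary (gs : seq config) (sigma : config) (z : V) : Prop :=
  forall y, in_ball z y -> in_boundary gs sigma y.

Definition Peierls {R : realType} (J1 J2 : R) : Prop :=
  exists gs : seq config,
    (forall a, ground_state J1 J2 a <-> exists2 a', List.In a' gs & a =1 a') /\
    (forall a, List.In a gs -> period_le2 a) /\
    exists lambda : R, (0 < lambda)%R /\
      forall a, List.In a gs ->
      forall (sigma : config) (D : seq V), (forall x, x \notin D -> sigma x = a x) ->
        exists s : seq V,
          [/\ uniq s, (forall z, z \in s <-> ball_in_boundary gs sigma z)
            & (lambda * (size s)%:R <= Hrel J1 J2 D sigma a)%R].

(* Main.v *)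
Require Import Defs.
From HB Require Import structures.
From mathcomp Require Import all_boot all_order all_algebra.
From mathcomp Require Import all_classical all_reals.
From mathcomp Require Import zify ring lra.
Set Implicit Arguments. Unset Strict Implicit. Unset Printing Implicit Defensive.
Import Order.TTheory GRing.Theory Num.Theory.

Definition red (l : seq 'I_3) := foldr push [::] l.

Lemma push_cons_reduced i w : reduced (i :: w) -> push i w = i :: w.
Proof.
case: w => [|j w'] //=; rewrite /reduced /= => /andP [ne _].
by rewrite eq_sym (negbTE ne).
Qed.

Lemma push_invol i w : reduced w -> push i (push i w) = w.
Proof.
case: w => [|j w'] /=; first by rewrite eqxx.
case: eqP => [-> | ne] H.
  by rewrite push_cons_reduced.
by rewrite /= eqxx.
Qed.

Lemma red_reduced w : reduced w -> red w = w.
Proof.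
elim: w => [|i w IH] //= H.
rewrite IH; last exact: (path_sorted H).
exact: push_cons_reduced.
Qed.

Lemma foldr_push_reduced g l : reduced g -> reduced (foldr push g l).
Proof. by move=> H; elim: l => [|i l IH] //=; apply: push_reduced. Qed.

Lemma action g i w : reduced g -> foldr push g (push i w) = push i (foldr push g w).
Proof.
move=> Hg; case: w => [|j w'] //=.
case: eqP => [->|_] //=.
by rewrite push_invol // foldr_push_reduced.
Qed.

Lemma foldr_red g u : reduced g -> foldr push g (red u) = foldr push g u.
Proof. by move=> Hg; elim: u => [|i u IH] //=; rewrite action // IH. Qed.

Lemma foldr_rev_cancel x : reduced x -> foldr push x (rev x) = [::].
Proof.
elim: x => [|a x IH] //= H.
by rewrite rev_cons foldr_rcons /= eqxx IH //; apply: (path_sorted H).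
Qed.

Lemma foldr_pushV_val (g : V) l : val (foldr pushV g l) = foldr push (val g) l.
Proof. by elim: l => [|i l IH] //=; rewrite IH. Qed.

Lemma mulV_val (g h : V) : val (mulV g h) = foldr push (val g) (val h).
Proof. exact: foldr_pushV_val. Qed.

Lemma dist_spec (x y : V) : val y = foldr push (val x) (val (mulV (Defs.invV x) y)).
Proof.
rewrite mulV_val /=.
have Hx := proj2_sig x; have Hy := proj2_sig y.
have -> : foldr push (rev (val x)) (val y) = red (val y ++ rev (val x)).
  by rewrite /red foldr_cat -/(red _) red_reduced //; apply: rev_reduced.
by rewrite foldr_red // foldr_cat foldr_rev_cancel // -/(red _) red_reduced.
Qed.

Lemma dist_refl (z : V) : dist z z = 0%N.
Proof.
rewrite /dist mulV_val /=.
have H := rev_reduced (proj2_sig z).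
by rewrite -{2}(revK (val z)) foldr_rev_cancel.
Qed.

Lemma pushV_invol i (x : V) : pushV i (pushV i x) = x.
Proof. by apply: val_inj; rewrite /= push_invol // (proj2_sig x). Qed.

Fixpoint B k (x : V) : seq V := if k is k'.+1 then B k' x ++ flatten [seq nbrs y | y <- B k' x] else [:: x].

Lemma nbr_mem i (x : V) : pushV i x \in nbrs x.
Proof. by apply: map_f; rewrite mem_enum. Qed.

Lemma nbrsP (x y : V) : reflect (exists i, y = pushV i x) (y \in nbrs x).
Proof.
apply: (iffP mapP) => [[i _ ->]|[i ->]]; exists i => //; by rewrite mem_enum.
Qed.

Lemma nbrs_sym (x y : V) : y \in nbrs x -> x \in nbrs y.
Proof. by case/nbrsP=> i ->; apply/nbrsP; exists i; rewrite pushV_invol. Qed.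

Lemma B_mono1 k x y : y \in B k x -> y \in B k.+1 x.
Proof. by move=> H /=; rewrite mem_cat H. Qed.

Lemma B_mono k k' x y : (k <= k')%N -> y \in B k x -> y \in B k' x.
Proof.
move=> /subnK <-; elim: (k' - k)%N => [|d IH] //= H.
by rewrite mem_cat IH.
Qed.

Lemma B_step k x t i : t \in B k x -> pushV i t \in B k.+1 x.
Proof.
move=> H /=; rewrite mem_cat; apply/orP; right.
by apply/flatten_mapP; exists t => //; apply: nbr_mem.
Qed.

Lemma B_nbr k x t y : t \in B k x -> y \in nbrs t -> y \in B k.+1 x.
Proof. by move=> H /nbrsP [i ->]; apply: B_step. Qed.

Lemma foldr_B x l : foldr pushV x l \in B (size l) x.
Proof.
elim: l => [|i l IH] /=; first by rewrite mem_seq1.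
exact: B_step.
Qed.

Lemma dist_B x y k : (dist x y <= k)%N -> y \in B k x.
Proof.
move=> H.
have -> : y = foldr pushV x (val (mulV (Defs.invV x) y)).
  by apply: val_inj; rewrite foldr_pushV_val -dist_spec.
exact: (B_mono H (foldr_B _ _)).
Qed.

Lemma B_trans m n x y z : y \in B m x -> z \in B n y -> z \in B (m + n) x.
Proof.
move=> Hy; elim: n z => [|n IH] z /=.
  by rewrite mem_seq1 addn0 => /eqP ->.
rewrite mem_cat addnS => /orP [H|/flatten_mapP [t Ht Hz]].
  by apply: B_mono1; apply: IH.
by apply: (B_nbr (IH _ Ht)).
Qed.

Lemma size_nbrs x : size (nbrs x) = 3%N.
Proof. by rewrite size_map size_enum_ord. Qed.

Lemma size_flatten_const (T U : Type) (f : T -> seq U) c s :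
  (forall y, size (f y) = c) -> size (flatten (map f s)) = (c * size s)%N.
Proof. move=> H; elim: s => [|y s IH] /=; first by rewrite muln0. by rewrite size_cat IH H mulnS. Qed.

Lemma size_B k x : size (B k x) = (4 ^ k)%N.
Proof.
elim: k => [|k IH] //=.
rewrite size_cat (size_flatten_const _ (c := 3%N)) ?IH; last by move=> y; rewrite size_nbrs.
by rewrite expnS; lia.
Qed.
Definition i0 : 'I_3 := @Ordinal 3 0 isT.
Definition i1 : 'I_3 := @Ordinal 3 1 isT.
Definition i2 : 'I_3 := @Ordinal 3 2 isT.

Lemma my_enumI3 : enum 'I_3 = [:: i0; i1; i2].
Proof. apply: (@inj_map _ _ (@nat_of_ord 3) (@ord_inj 3)). rewrite val_enum_ord. by []. Qed.

Lemma nbrs3 x : nbrs x = [:: pushV i0 x; pushV i1 x; pushV i2 x].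
Proof. by rewrite /nbrs my_enumI3. Qed.

Lemma forall_I3 (P : 'I_3 -> Prop) : P i0 -> P i1 -> P i2 -> forall i, P i.
Proof.
move=> H0 H1 H2 [[|[|[|n]]] Hn] //.
- by have -> : Ordinal Hn = i0 by apply: ord_inj.
- by have -> : Ordinal Hn = i1 by apply: ord_inj.
- by have -> : Ordinal Hn = i2 by apply: ord_inj.
Qed.

Lemma sum_I3 (R : realType) (F : 'I_3 -> R) : (\sum_(i < 3) F i = F i0 + F i1 + F i2)%R.
Proof.
rewrite !big_ord_recl big_ord0 GRing.addr0 GRing.addrA.
congr (F _ + F _ + F _)%R; by apply: ord_inj.
Qed.

Section Energy2.
Variable R : realType.
Variables J1 J2 : R.
Local Open Scope ring_scope.

Lemma U_ball_class (s : config) x : U_ball J1 J2 s x = Uval J1 J2 (class_of s x).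
Proof.
rewrite /U_ball /class_of nbrs3 !sum_I3.
do 3! rewrite big_mkcond sum_I3 /=.
case: (s x); case: (s (pushV i0 x)); case: (s (pushV i1 x)); case: (s (pushV i2 x));
  rewrite /spin /Uval /=; lra.
Qed.


Lemma Umin_le m : Umin J1 J2 <= Uval J1 J2 m.
Proof.
rewrite /Umin; case: m => [|[|[|[|m]]]]; rewrite !ge_min ?lexx ?orbT //.
Qed.

Lemma class_cases (s : config) x :
  [\/ class_of s x = 1%N, class_of s x = 2%N, class_of s x = 3%N | class_of s x = 4%N].
Proof.
rewrite /class_of; case: count => [|[|[|[|n]]]]; by constructor.
Qed.

Lemma inCS_class (s : config) x : in_CS J1 J2 s x = (Uval J1 J2 (class_of s x) == Umin J1 J2).
Proof.
rewrite /in_CS; case: (class_cases s x) => ->; by rewrite /= ?andbT ?andbF ?orbF.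
Qed.

Lemma inCS_U (s : config) x : in_CS J1 J2 s x = (U_ball J1 J2 s x == Umin J1 J2).
Proof. by rewrite inCS_class U_ball_class. Qed.

Lemma class1P (s : config) x : class_of s x = 1%N <-> forall i, s (pushV i x) = s x.
Proof.
rewrite /class_of nbrs3 /=; split => [H|H].
  apply: forall_I3; move: H;
  case: (s x); case: (s (pushV i0 x)); case: (s (pushV i1 x)); case: (s (pushV i2 x)); by [].
move: (H i0) (H i1) (H i2).
case: (s x); case: (s (pushV i0 x)); case: (s (pushV i1 x)); case: (s (pushV i2 x)); by [].
Qed.

Lemma class3P (s : config) x : class_of s x = 3%N <-> forall i, s (pushV i x) <> s x.
Proof.
rewrite /class_of nbrs3 /=; split => [H|H].
  apply: forall_I3; move: H;
  case: (s x); case: (s (pushV i0 x)); case: (s (pushV i1 x)); case: (s (pushV i2 x)); by [].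
move: (H i0) (H i1) (H i2).
case: (s x); case: (s (pushV i0 x)); case: (s (pushV i1 x)); case: (s (pushV i2 x)); by [].
Qed.

Lemma inCS_local (s t : config) x : s x = t x -> (forall i, s (pushV i x) = t (pushV i x)) ->
  in_CS J1 J2 s x = in_CS J1 J2 t x.
Proof. by move=> Hx H; rewrite /in_CS /class_of nbrs3 /= Hx !H. Qed.

Lemma inCS_13 (s : config) x : Uval J1 J2 2 != Umin J1 J2 -> Uval J1 J2 4 != Umin J1 J2 ->
  in_CS J1 J2 s x ->
  (Uval J1 J2 1 == Umin J1 J2 /\ class_of s x = 1%N) \/ (Uval J1 J2 3 == Umin J1 J2 /\ class_of s x = 3%N).
Proof.
move=> N2 N4; rewrite inCS_class; case: (class_cases s x) => ->; first [by left | by right | by move=> H; rewrite H in N2 N4].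
Qed.

End Energy2.

Lemma sphere2_mem i j x : i != j -> pushV j (pushV i x) \in sphere2 x.
Proof.
move=> ne; apply/flatten_mapP; exists i; first by rewrite mem_enum.
by apply: (map_f (fun j => pushV j (pushV i x))); rewrite mem_filter mem_enum eq_sym ne.
Qed.

Lemma sphere2_3 x : sphere2 x =
  [:: pushV i1 (pushV i0 x); pushV i2 (pushV i0 x); pushV i0 (pushV i1 x);
      pushV i2 (pushV i1 x); pushV i0 (pushV i2 x); pushV i1 (pushV i2 x)].
Proof. by rewrite /sphere2 my_enumI3. Qed.

Lemma pushV_inj i : injective (pushV i).
Proof. exact: (can_inj (pushV_invol i)). Qed.

Section Ham.
Variable R : realType.
Variables J1 J2 : R.
Variables (s a : config) (D : seq V).
Hypothesis HD : forall x, x \notin D -> s x = a x.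
Local Open Scope ring_scope.

Definition N := relevant D.
Definition ff (u v : V) : R := spin (s u) * spin (s v) - spin (a u) * spin (a v).

Lemma ff_sym u v : ff u v = ff v u.
Proof. by rewrite /ff mulrC [spin (a u) * _]mulrC. Qed.

Lemma ff_supp u v : ff u v != 0 -> (u \in D) || (v \in D).
Proof.
apply: contraR; rewrite negb_or => /andP [Hu Hv].
by rewrite /ff !HD // subrr.
Qed.

Lemma memN_D x : x \in D -> x \in N.
Proof. by move=> H; rewrite /N /relevant mem_undup mem_cat H. Qed.

Lemma memN_nbr x y : x \in D -> y \in nbrs x -> y \in N.
Proof.
move=> H Hy; rewrite /N /relevant mem_undup !mem_cat; apply/orP; right; apply/orP; left.
by apply/flatten_mapP; exists x.
Qed.

Lemma memN_s2 x y : x \in D -> y \in sphere2 x -> y \in N.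
Proof.
move=> H Hy; rewrite /N /relevant mem_undup !mem_cat; apply/orP; right; apply/orP; right.
by apply/flatten_mapP; exists x.
Qed.

Lemma sum_supp (T : eqType) (L1 L2 : seq T) (g : T -> R) : uniq L1 -> uniq L2 ->
  (forall y, g y != 0 -> (y \in L1) && (y \in L2)) ->
  \sum_(y <- L1) g y = \sum_(y <- L2) g y.
Proof.
move=> U1 U2 H.
have nz : forall L, \sum_(y <- L | g y != 0) g y = \sum_(y <- L) g y.
  move=> L. rewrite big_mkcond. apply: eq_bigr => y _.
  case: (boolP (g y != 0)) => //. move=> /negPn /eqP E. by rewrite E.
rewrite -(nz L1) -(nz L2).
rewrite -(big_filter L1) -(big_filter L2). apply: perm_big. apply: uniq_perm; rewrite ?filter_uniq //.
move=> y; rewrite !mem_filter; case E: (g y != 0) => //=.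
by have /andP [-> ->] := H y E.
Qed.

Lemma translate i j : i != j ->
  \sum_(x <- N) ff x (pushV j (pushV i x)) = \sum_(x <- N) ff (pushV i x) (pushV j x).
Proof.
move=> ne.
set g := fun y => ff y (pushV j (pushV i y)).
have -> : \sum_(x <- N) ff (pushV i x) (pushV j x) = \sum_(x <- N) g (pushV i x).
  by apply: eq_bigr => x _; rewrite /g pushV_invol.
rewrite -(big_map (pushV i) xpredT g).
apply: sum_supp; first exact: undup_uniq.
  rewrite map_inj_uniq ?undup_uniq //; exact: pushV_inj.
move=> y /ff_supp /orP [Hy|Hw].
  rewrite memN_D //=; apply/mapP; exists (pushV i y); last by rewrite pushV_invol.
  by apply: (memN_nbr Hy); apply: nbr_mem.
set w := pushV j (pushV i y) in Hw.
apply/andP; split.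
  apply: (memN_s2 Hw).
  have -> : y = pushV i (pushV j w) by rewrite /w !pushV_invol.
  by apply: sphere2_mem; rewrite eq_sym.
apply/mapP; exists (pushV i y); last by rewrite pushV_invol.
apply: (memN_nbr Hw).
have -> : pushV i y = pushV j w by rewrite /w pushV_invol.
exact: nbr_mem.
Qed.


Lemma Udiff x : U_ball J1 J2 s x - U_ball J1 J2 a x =
  2^-1 * J1 * (ff x (pushV i0 x) + ff x (pushV i1 x) + ff x (pushV i2 x)) +
  J2 * (ff (pushV i0 x) (pushV i1 x) + ff (pushV i0 x) (pushV i2 x) + ff (pushV i1 x) (pushV i2 x)).
Proof.
rewrite /U_ball !sum_I3; do 6! rewrite big_mkcond sum_I3 /=.
rewrite /ff; ring.
Qed.

Lemma Hrel_eq : Hrel J1 J2 D s a = \sum_(x <- N) (U_ball J1 J2 s x - U_ball J1 J2 a x).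
Proof.
have -> : Hrel J1 J2 D s a = 2^-1 * J1 * (\sum_(x <- N) \sum_(y <- nbrs x) ff x y)
   + 2^-1 * J2 * (\sum_(x <- N) \sum_(y <- sphere2 x) ff x y) by [].
have EA : \sum_(x <- N) \sum_(y <- nbrs x) ff x y =
  \sum_(x <- N) ff x (pushV i0 x) + \sum_(x <- N) ff x (pushV i1 x) + \sum_(x <- N) ff x (pushV i2 x).
  rewrite -!big_split; apply: eq_bigr => x _; rewrite nbrs3 !big_cons big_nil /=; ring.
have EB : \sum_(x <- N) \sum_(y <- sphere2 x) ff x y =
  \sum_(x <- N) ff x (pushV i1 (pushV i0 x)) + \sum_(x <- N) ff x (pushV i2 (pushV i0 x)) +
  \sum_(x <- N) ff x (pushV i0 (pushV i1 x)) + \sum_(x <- N) ff x (pushV i2 (pushV i1 x)) +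
  \sum_(x <- N) ff x (pushV i0 (pushV i2 x)) + \sum_(x <- N) ff x (pushV i1 (pushV i2 x)).
  rewrite -!big_split; apply: eq_bigr => x _; rewrite sphere2_3 !big_cons big_nil /=; ring.
rewrite EA EB !translate //.
have S : forall i j, \sum_(x <- N) ff (pushV i x) (pushV j x) = \sum_(x <- N) ff (pushV j x) (pushV i x).
  by move=> i j; apply: eq_bigr => x _; apply: ff_sym.
rewrite [\sum_(x <- N) ff (pushV i1 x) (pushV i0 x)]S [\sum_(x <- N) ff (pushV i2 x) (pushV i0 x)]S.
rewrite [\sum_(x <- N) ff (pushV i2 x) (pushV i1 x)]S.
have ER : \sum_(x <- N) (U_ball J1 J2 s x - U_ball J1 J2 a x) =
  2^-1 * J1 * (\sum_(x <- N) ff x (pushV i0 x) + \sum_(x <- N) ff x (pushV i1 x) + \sum_(x <- N) ff x (pushV i2 x))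
  + J2 * (\sum_(x <- N) ff (pushV i0 x) (pushV i1 x) + \sum_(x <- N) ff (pushV i0 x) (pushV i2 x)
          + \sum_(x <- N) ff (pushV i1 x) (pushV i2 x)).
  rewrite [in RHS]mulrDr [in RHS]mulrDr [in RHS]mulrDr [in RHS]mulrDr.
  rewrite !mulr_sumr -!big_split; apply: eq_bigr => x _; rewrite Udiff /=; ring.
rewrite ER.
move: (\sum_(x <- N) ff x (pushV i0 x)) (\sum_(x <- N) ff x (pushV i1 x)) (\sum_(x <- N) ff x (pushV i2 x)) => t0 t1 t2.
move: (\sum_(x <- N) ff (pushV i0 x) (pushV i1 x)) (\sum_(x <- N) ff (pushV i0 x) (pushV i2 x)) (\sum_(x <- N) ff (pushV i1 x) (pushV i2 x)) => p q r.
by field.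
Qed.

End Ham.

Definition e0 : V := pushV i0 eV.

Lemma bn_e0 : balls_nbr eV e0.
Proof. rewrite /balls_nbr /ball_edges my_enumI3. by vm_compute. Qed.
Lemma dist_e01 : (dist e0 (pushV i1 e0) <= 1)%N.
Proof. by vm_compute. Qed.

Lemma compat_nbr (s t : config) x x' : x != x' -> s x = t x -> s x' = t x' -> compatible s x t x'.
Proof.
move=> ne Hx Hx' e f /mapP [i _ ->] /mapP [j _ ->].
rewrite /same_edge /= => /orP [/andP [/eqP E _]|/andP [_ /eqP E]].
  by rewrite E eqxx in ne.
by rewrite E.
Qed.

Definition Hyp (R : realType) (J1 J2 : R) :=
  forall (x x' : V) (sigma : config),
      in_CS J1 J2 sigma x -> balls_nbr x x' ->
      exists tau : config,
        [/\ in_CS J1 J2 tau x', compatible sigma x tau x' &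
            forall tau' : config, in_CS J1 J2 tau' x' -> compatible sigma x tau' x' ->
              agree_on_ball x' tau' tau].

Lemma not_c2 (R : realType) (J1 J2 : R) : Hyp J1 J2 -> Uval J1 J2 2 != Umin J1 J2.
Proof.
move=> H; apply/negP => c2.
pose sg : config := fun v : V => val v != [:: i2].
pose t1 : config := fun v : V => val v != [:: i1; i0].
pose t2 : config := fun v : V => val v != [:: i2; i0].
have Hs : in_CS J1 J2 sg eV.
  by rewrite inCS_class; have -> : class_of sg eV = 2%N by rewrite /class_of nbrs3; vm_compute.
have [tau [_ _ U]] := H eV e0 _ Hs bn_e0.
have C1 : in_CS J1 J2 t1 e0.
  by rewrite inCS_class; have -> : class_of t1 e0 = 2%N by rewrite /class_of nbrs3; vm_compute.
have C2 : in_CS J1 J2 t2 e0.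
  by rewrite inCS_class; have -> : class_of t2 e0 = 2%N by rewrite /class_of nbrs3; vm_compute.
have K1 : compatible sg eV t1 e0 by apply: compat_nbr; vm_compute.
have K2 : compatible sg eV t2 e0 by apply: compat_nbr; vm_compute.
have A1 := U _ C1 K1 _ dist_e01.
have A2 := U _ C2 K2 _ dist_e01.
have : t1 (pushV i1 e0) = t2 (pushV i1 e0) by rewrite A1 A2.
by vm_compute.
Qed.

Lemma not_c4 (R : realType) (J1 J2 : R) : Hyp J1 J2 -> Uval J1 J2 4 != Umin J1 J2.
Proof.
move=> H; apply/negP => c4.
pose sg : config := fun v : V => (val v == [::]) || (val v == [:: i1]).
pose t1 : config := fun v : V => (val v == [::]) || (val v == [:: i1; i0]).
pose t2 : config := fun v : V => (val v == [::]) || (val v == [:: i2; i0]).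
have Hs : in_CS J1 J2 sg eV.
  by rewrite inCS_class; have -> : class_of sg eV = 4%N by rewrite /class_of nbrs3; vm_compute.
have [tau [_ _ U]] := H eV e0 _ Hs bn_e0.
have C1 : in_CS J1 J2 t1 e0.
  by rewrite inCS_class; have -> : class_of t1 e0 = 4%N by rewrite /class_of nbrs3; vm_compute.
have C2 : in_CS J1 J2 t2 e0.
  by rewrite inCS_class; have -> : class_of t2 e0 = 4%N by rewrite /class_of nbrs3; vm_compute.
have K1 : compatible sg eV t1 e0 by apply: compat_nbr; vm_compute.
have K2 : compatible sg eV t2 e0 by apply: compat_nbr; vm_compute.
have A1 := U _ C1 K1 _ dist_e01.
have A2 := U _ C2 K2 _ dist_e01.
have : t1 (pushV i1 e0) = t2 (pushV i1 e0) by rewrite A1 A2.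
by vm_compute.
Qed.

Definition cst (b : bool) : config := fun _ => b.
Definition alt (b : bool) : config := fun v => addb b (odd (size (val v))).

Lemma odd_push i w : odd (size (push i w)) = ~~ odd (size w).
Proof. case: w => [|j w] //=; case: eqP => //= _; by rewrite negbK. Qed.

Lemma alt_push b i x : alt b (pushV i x) = ~~ alt b x.
Proof. by rewrite /alt /= odd_push addbN. Qed.

Lemma alt_eV b : alt b eV = b.
Proof. by rewrite /alt /= addbF. Qed.

Lemma odd_mulV (g h : V) : odd (size (val (mulV g h))) = addb (odd (size (val g))) (odd (size (val h))).
Proof.
rewrite mulV_val; case: h => h Hh /=; elim: h {Hh} => [|i h IH] /=; first by rewrite addbF.
by rewrite odd_push IH addbN.
Qed.

Definition Pall : V -> Prop := fun _ => True.
Definition Peven : V -> Prop := fun g => ~~ odd (size (val g)).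

Lemma per_cst b : period_le2 (cst b).
Proof.
exists Pall; split; first by split => //; split.
exists [:: eV]; split => // h; exists eV; first by rewrite mem_seq1.
by exists h.
Qed.

Lemma per_alt b : period_le2 (alt b).
Proof.
exists Peven; split.
  split; first split.
  - by [].
  - by move=> g h; rewrite /Peven odd_mulV => /negbTE -> /negbTE ->.
  - by move=> g; rewrite /Peven /= size_rev.
  by move=> g h; rewrite /Peven /alt odd_mulV => /negbTE ->.
exists [:: eV; pushV i0 eV]; split => // h.
case E: (odd (size (val h))).
  exists (pushV i0 eV); first by rewrite !inE eqxx orbT.
  exists (pushV i0 h); split; first by rewrite /Peven /= odd_push E.
  by rewrite /mulV /= pushV_invol.
exists eV; first by rewrite !inE eqxx.
by exists h; rewrite /Peven E.
Qed.

Lemma word_ind (P : V -> Prop) : P eV -> (forall i x, P x -> P (pushV i x)) -> forall x, P x.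
Proof.
move=> H0 HS [w Hw]; elim: w Hw => [|i w IH] Hw.
  by have -> : exist reduced [::] Hw = eV by apply: val_inj.
have Hw' : reduced w := path_sorted Hw.
have -> : exist reduced (i :: w) Hw = pushV i (exist reduced w Hw').
  by apply: val_inj; rewrite /= push_cons_reduced.
by apply: HS; apply: IH.
Qed.

Lemma bool_neq (a b : bool) : a <> b -> a = ~~ b.
Proof. by case: a; case: b. Qed.

Lemma B2_cases x y : y \in B 2 x ->
  [\/ y = x, exists i, y = pushV i x | exists i j, y = pushV j (pushV i x)].
Proof.
rewrite /= !cats0 in_cons !mem_cat => /orP [/eqP ->|/orP [Hy|/orP [Hy|/flatten_mapP [t Ht Hy]]]].
- by constructor 1.
- by case/nbrsP: Hy => i ->; constructor 2; exists i.
- by case/nbrsP: Hy => i ->; constructor 2; exists i.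
- case/nbrsP: Ht => i Et; rewrite Et in Hy; case/nbrsP: Hy => j ->.
  by constructor 3; exists i, j.
Qed.

Section GS.
Variable R : realType.
Variables J1 J2 : R.
Hypothesis N2 : Uval J1 J2 2 != Umin J1 J2.
Hypothesis N4 : Uval J1 J2 4 != Umin J1 J2.
Local Open Scope ring_scope.

Definition c1 := Uval J1 J2 1 == Umin J1 J2.
Definition c3 := Uval J1 J2 3 == Umin J1 J2.

Definition gs : seq config :=
  (if c1 then [:: cst true; cst false] else [::]) ++ (if c3 then [:: alt true; alt false] else [::]).

Lemma gs_cst b : c1 -> List.In (cst b) gs.
Proof. by move=> H; apply: List.in_or_app; left; rewrite H; case: b; simpl; auto. Qed.

Lemma gs_alt b : c3 -> List.In (alt b) gs.
Proof. by move=> H; apply: List.in_or_app; right; rewrite H; case: b; simpl; auto. Qed.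

Lemma gs_cases a : List.In a gs -> (c1 /\ exists b, a = cst b) \/ (c3 /\ exists b, a = alt b).
Proof.
move=> H; case: (List.in_app_or _ _ _ H).
  case E: c1 => //= -[<-|[<-|[]]]; by left; split => //; eexists.
case E: c3 => //= -[<-|[<-|[]]]; by right; split => //; eexists.
Qed.

Lemma gs_inCS a : List.In a gs -> forall x, in_CS J1 J2 a x.
Proof.
case/gs_cases => [[H [b ->]]|[H [b ->]]] x; rewrite inCS_class.
  by have -> : class_of (cst b) x = 1%N by apply/class1P.
have -> : class_of (alt b) x = 3%N.
  by apply/class3P => i; rewrite alt_push; case: (alt b x).
by [].
Qed.

Lemma gs_ground a : List.In a gs -> ground_state J1 J2 a.
Proof.
move=> H; split.
  have [P [HP HI]] : period_le2 a.
    by case: (gs_cases H) => [[_ [b ->]]|[_ [b ->]]]; [apply: per_cst|apply: per_alt].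
  by exists P; split => //; exists 2%N.
by move=> x; apply/eqP; rewrite -inCS_U; apply: gs_inCS.
Qed.

Lemma gs_le2 a : List.In a gs -> period_le2 a.
Proof. by case/gs_cases => [[_ [b ->]]|[_ [b ->]]]; [apply: per_cst|apply: per_alt]. Qed.

Lemma ground_gs a : ground_state J1 J2 a -> exists2 a', List.In a' gs & a =1 a'.
Proof.
case=> _ Hg.
have G : forall x, in_CS J1 J2 a x by move=> x; rewrite inCS_U Hg eqxx.
case: (inCS_13 N2 N4 (G eV)) => [[H1 Hc]|[H3 Hc]].
  exists (cst (a eV)); first exact: gs_cst.
  suff P : forall x, a x = a eV /\ class_of a x = 1%N by move=> x; case: (P x).
  apply: word_ind => // i x [Hx Hcx].
  have E : a (pushV i x) = a x by move/class1P: Hcx; apply.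
  split; first by rewrite E.
  case: (inCS_13 N2 N4 (G (pushV i x))) => [[_ ->]|[_ /class3P C]] //.
  by have := C i; rewrite pushV_invol E.
exists (alt (a eV)); first exact: gs_alt.
suff P : forall x, a x = alt (a eV) x /\ class_of a x = 3%N by move=> x; case: (P x).
apply: word_ind; first by rewrite alt_eV.
move=> i x [Hx Hcx].
have E : a (pushV i x) = ~~ a x by apply: bool_neq; move/class3P: Hcx; apply.
split; first by rewrite E alt_push Hx.
case: (inCS_13 N2 N4 (G (pushV i x))) => [[_ /class1P C]|[_ ->]] //.
by have := C i; rewrite pushV_invol E; case: (a x).
Qed.

Lemma local_gs (s : config) x : in_CS J1 J2 s x -> (forall i, in_CS J1 J2 s (pushV i x)) ->
  exists2 a, List.In a gs & forall y, y \in B 2 x -> s y = a y.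
Proof.
move=> Hx Hn.
case: (inCS_13 N2 N4 Hx) => [[H1 /class1P Hc]|[H3 /class3P Hc]].
  exists (cst (s x)); first exact: gs_cst.
  move=> y /B2_cases [->|[i ->]|[i [j ->]]] //.
  rewrite /cst.
  case: (inCS_13 N2 N4 (Hn i)) => [[_ /class1P C]|[_ /class3P C]].
    by rewrite C Hc.
  by have := C i; rewrite pushV_invol Hc.
exists (alt (addb (s x) (odd (size (val x))))); first exact: gs_alt.
have Ax : alt (addb (s x) (odd (size (val x)))) x = s x by rewrite /alt -addbA addbb addbF.
have Hc' : forall i, s (pushV i x) = ~~ s x by move=> i; apply: bool_neq.
move=> y /B2_cases [->|[i ->]|[i [j ->]]] //; first by rewrite alt_push Ax Hc'.
rewrite !alt_push Ax negbK.
case: (inCS_13 N2 N4 (Hn i)) => [[_ /class1P C]|[_ /class3P C]].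
  by have := C i; rewrite pushV_invol Hc'; case: (s x).
by rewrite (bool_neq (C j)) Hc' negbK.
Qed.

End GS.

Section Delta.
Variable R : realType.
Variables J1 J2 : R.
Local Open Scope ring_scope.

Definition gap m : R := if Uval J1 J2 m == Umin J1 J2 then 1 else Uval J1 J2 m - Umin J1 J2.
Definition delta : R := Num.min (Num.min (gap 1) (gap 2)) (Num.min (gap 3) (gap 4)).

Lemma gap_gt0 m : 0 < gap m.
Proof.
rewrite /gap; case: eqP => [_|ne] //; rewrite subr_gt0 lt_def.
by rewrite Umin_le andbT; apply/eqP => E; apply: ne.
Qed.

Lemma delta_gt0 : 0 < delta.
Proof. by rewrite /delta !lt_min !gap_gt0. Qed.

Lemma bad_bound (s : config) x : ~~ in_CS J1 J2 s x -> delta <= U_ball J1 J2 s x - Umin J1 J2.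
Proof.
rewrite inCS_class U_ball_class => /negbTE H.
have : delta <= gap (class_of s x).
  by rewrite /delta; case: (class_cases s x) => ->; rewrite !ge_min lexx ?orbT.
by rewrite /gap H.
Qed.

Lemma good_bound (s : config) x : 0 <= U_ball J1 J2 s x - Umin J1 J2.
Proof. by rewrite subr_ge0 U_ball_class Umin_le. Qed.

End Delta.

Lemma sum_const_seq (R : realType) (T : Type) (l : seq T) (c : R) :
  (\sum_(x <- l) c = c * (size l)%:R)%R.
Proof.
elim: l => [|y l IH]; first by rewrite big_nil mulr0.
by rewrite big_cons IH /= -addn1 natrD mulrDr mulr1 addrC.
Qed.

Unset Implicit Arguments.

Theorem theorem6p3 (R : realType) (J1 J2 : R) :
  (forall (x x' : V) (sigma : config),
      in_CS J1 J2 sigma x -> balls_nbr x x' ->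
      exists tau : config,
        [/\ in_CS J1 J2 tau x', compatible sigma x tau x' &
            forall tau' : config, in_CS J1 J2 tau' x' -> compatible sigma x tau' x' ->
              agree_on_ball x' tau' tau]) ->
  Peierls J1 J2.
Proof.
move=> H.
have N2 := not_c2 H; have N4 := not_c4 H.
exists (gs J1 J2); split.
  move=> a; split; first exact: ground_gs.
  by case=> a' Ha' E; rewrite (funext E); apply: gs_ground.
split; first exact: gs_le2.
exists (delta J1 J2 / 64%:R)%R; split.
  by rewrite divr_gt0 ?delta_gt0 // ltr0n.
move=> a Ha sg D HD.
pose Nl := N D.
pose bad := [seq x <- Nl | ~~ in_CS J1 J2 sg x].
have GEO : forall z, ball_in_boundary (gs J1 J2) sg z -> exists2 y, y \in bad & z \in B 3 y.
  move=> z Hz.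
  have [x [Himp Hd]] : in_boundary (gs J1 J2) sg z by apply: Hz; rewrite /in_ball dist_refl.
  have [y Hy1 Hbad] : exists2 y, y \in B 1 x & ~~ in_CS J1 J2 sg y.
    apply/allPn; apply/negP => Hall.
    have Hx : in_CS J1 J2 sg x by apply: (allP Hall); rewrite /= in_cons eqxx.
    have Hn : forall i, in_CS J1 J2 sg (pushV i x).
      by move=> i; apply: (allP Hall); rewrite /= cats0 in_cons nbr_mem orbT.
    have [a' Ha' Ag] := local_gs N2 N4 Hx Hn.
    have [y' [Hdy Hne]] := Himp a' Ha'.
    by apply: Hne; apply: Ag; apply: dist_B.
  exists y.
    rewrite mem_filter Hbad /=.
    case: (boolP (y \in D)) => [HyD|HyD]; first exact: memN_D.
    case: (boolP (has (fun t => t \in D) (nbrs y))) => [/hasP [t Ht HtD]|/hasPn Hn].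
      exact: (memN_nbr HtD (nbrs_sym Ht)).
    exfalso; move/negP: Hbad; apply.
    rewrite (@inCS_local _ J1 J2 sg a y).
    - exact: (gs_inCS Ha y).
    - exact: HD.
    - by move=> i; apply: HD; apply: Hn; apply: nbr_mem.
  have Hx1 : x \in B 1 y.
    rewrite /= cats0 in_cons.
    move: Hy1; rewrite /= cats0 in_cons => /orP [/eqP ->|Hyn]; first by rewrite eqxx.
    by rewrite (nbrs_sym Hyn) orbT.
  exact: (B_trans Hx1 (dist_B Hd)).
pose C := undup (flatten [seq B 3 y | y <- Nl]).
exists [seq z <- C | `[< ball_in_boundary (gs J1 J2) sg z >] ]; split.
- by rewrite filter_uniq // undup_uniq.
- move=> z; rewrite mem_filter; split; first by case/andP => /asboolP.
  move=> Hz; apply/andP; split; first by apply/asboolP.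
  case: (GEO z Hz) => y; rewrite mem_filter => /andP [_ Hy] Hzy.
  by rewrite mem_undup; apply/flatten_mapP; exists y.
have [_ Ga] := gs_ground Ha.
rewrite (@Hrel_eq R J1 J2 sg a D HD).
have E1 : (\sum_(x <- N D) (U_ball J1 J2 sg x - U_ball J1 J2 a x) =
           \sum_(x <- N D) (U_ball J1 J2 sg x - Umin J1 J2))%R.
  by apply: eq_bigr => x _; rewrite Ga.
rewrite E1.
have L1 : (delta J1 J2 * (size bad)%:R <= \sum_(x <- N D) (U_ball J1 J2 sg x - Umin J1 J2))%R.
  rewrite (bigID (fun x => ~~ in_CS J1 J2 sg x)).
  rewrite -[X in (X <= _)%R]addr0; apply: lerD.
    rewrite -sum_const_seq big_filter.
    by apply: ler_sum => x Hx; apply: bad_bound.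
  by apply: sumr_ge0 => x _; apply: good_bound.
have Ls : (size [seq z <- C | `[< ball_in_boundary (gs J1 J2) sg z >] ] <= 64 * size bad)%N.
  have -> : (64 * size bad = size (flatten [seq B 3 y | y <- bad]))%N.
    by rewrite (size_flatten_const _ (c := 64%N)) // => y; rewrite size_B.
  apply: uniq_leq_size; first by rewrite filter_uniq // undup_uniq.
  move=> z; rewrite mem_filter => /andP [/asboolP Hz _]; case: (GEO z Hz) => y Hy Hzy.
  by apply/flatten_mapP; exists y.
apply: le_trans L1.
have Hs : ((size [seq z <- C | `[< ball_in_boundary (gs J1 J2) sg z >] ])%:R <= 64%:R * (size bad)%:R :> R)%R.
  by rewrite -natrM ler_nat.
have dpos := delta_gt0 J1 J2.

nra.
Qed.
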